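(* Let $n\ge 6$ and let $\mathfrak g$ be an $n$-dimensional filiform Lie algebra with associated triple $(n-2,n-2,n)$. Then there exist an adapted basis $\{e_1,\dots,e_n\}$ of $\mathfrak g$ and complex numbers $\alpha,\gamma,\beta$ with $\alpha\neq0$ such that the nonzero brackets $[e_a,e_b]$, $a<b$, are exactly given by $[e_1,e_h]=e_{h-1}$ ($3\le h\le n$), $[e_{n-2},e_{n-1}]=\alpha e_2$, $[e_{n-2},e_n]=\alpha e_3+\gamma e_2$, $[e_{n-1},e_n]=\alpha e_4+\gamma e_3+\beta e_2$, all other brackets of basis elements with $a<b$ being zero. Conversely, for every $\alpha\in\mathbb C\setminus\{0\}$ and $\gamma,\beta\in\mathbb C$, these brackets define a Lie algebra which is filiform with associated triple $(n-2,n-2,n)$ (i.e. the Jacobi identity imposes no polynomial relation on $\alpha,\gamma,\beta$, and the only open condition is $\alpha\neq0$, equivalent to $[C^2\mathfrak g,C^3\mathfrak g]\neq\{0\}$).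
   Context: All Lie algebras are over $\mathbb C$; $C^1\mathfrak g=\mathfrak g$, $C^k\mathfrak g=[C^{k-1}\mathfrak g,\mathfrak g]$. A Lie algebra is filiform if $\dim\mathfrak g=n\ge2$ and $\dim C^k\mathfrak g=n-k$ for $2\le k\le n$. An adapted basis of a filiform $\mathfrak g$ is a basis $\{e_1,\dots,e_n\}$ with $[e_1,e_h]=e_{h-1}$ ($3\le h\le n$), $[e_2,e_h]=0$ ($1\le h\le n$), $[e_3,e_h]=0$ ($2\le h\le n$). For a non-model filiform $\mathfrak g$ (not isomorphic to the algebra with $[e_1,e_h]=e_{h-1}$ and other brackets zero), $z_1=\min\{k\ge4:[e_k,e_n]\ne0\}$ and $z_2=\min\{k\ge4:[e_k,e_{k+1}]\ne0\}$ computed in any adapted basis are isomorphism invariants; $(z_1,z_2,n)$ is the associated triple. *)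

(* Defs.v *)
(* Lie algebras over C := R[i] for an arbitrary realType R
   (R[i] = complex numbers over R; for R the real numbers this is C). *)
From HB Require Import structures.
From mathcomp Require Import all_boot all_order all_algebra reals.
From mathcomp.real_closed Require Export complex.
Set Implicit Arguments. Unset Strict Implicit. Unset Printing Implicit Defensive.
Import GRing.Theory.
Local Open Scope ring_scope.

Section Lie.
Variables (K : fieldType) (V : vectType K).

Definition is_lie_bracket (br : V -> V -> V) : Prop :=
  [/\ forall (a : K) x y z, br (a *: x + y) z = a *: br x z + br y z,
      forall (a : K) x y z, br x (a *: y + z) = a *: br x y + br x z,
      forall x, br x x = 0 &
      forall x y z, br x (br y z) + br y (br z x) + br z (br x y) = 0].

Definition bracket_space (br : V -> V -> V) (U W : {vspace V}) : {vspace V} :=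
  <<[seq br u w | u <- (vbasis U : seq V), w <- (vbasis W : seq V)]>>%VS.

(* lower central series: lcs br 1 = V, lcs br (k+1) = [lcs br k, V]
   (lcs br 0 is also V, by convention; it is never used) *)
Fixpoint lcs (br : V -> V -> V) (k : nat) : {vspace V} :=
  match k with
  | 0 => fullv
  | 1 => fullv
  | k'.+1 => bracket_space br (lcs br k') fullv
  end.

Definition filiform (br : V -> V -> V) (n : nat) : Prop :=
  [/\ (2 <= n)%N, \dim (fullv : {vspace V}) = n &
      forall k, (2 <= k <= n)%N -> \dim (lcs br k) = (n - k)%N].

Definition is_basis_n (n : nat) (e : nat -> V) : Prop :=
  basis_of fullv [seq e i | i <- iota 1 n].

Definition adapted_basis (br : V -> V -> V) (n : nat) (e : nat -> V) : Prop :=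
  [/\ is_basis_n n e,
      forall h, (3 <= h <= n)%N -> br (e 1%N) (e h) = e h.-1,
      forall h, (1 <= h <= n)%N -> br (e 2%N) (e h) = 0 &
      forall h, (2 <= h <= n)%N -> br (e 3%N) (e h) = 0].

Definition is_model (br : V -> V -> V) (n : nat) : Prop :=
  exists e : nat -> V, is_basis_n n e /\
    forall a b, (1 <= a)%N -> (a < b)%N -> (b <= n)%N ->
      br (e a) (e b) = if (a == 1%N) && (3 <= b)%N then e b.-1 else 0.

Definition is_least (P : nat -> Prop) (z : nat) : Prop :=
  P z /\ forall k, (k < z)%N -> ~ P k.

Definition z1_of (br : V -> V -> V) (n : nat) (e : nat -> V) (z : nat) :=
  is_least (fun k => (4 <= k <= n)%N /\ br (e k) (e n) <> 0) z.

Definition z2_of (br : V -> V -> V) (n : nat) (e : nat -> V) (z : nat) :=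
  is_least (fun k => (4 <= k)%N /\ (k < n)%N /\ br (e k) (e k.+1) <> 0) z.

(* Since z1, z2 are isomorphism invariants (independent
   of the adapted basis), it suffices to compute them in one adapted basis. *)
Definition has_triple (br : V -> V -> V) (z1 z2 n : nat) : Prop :=
  [/\ is_lie_bracket br, filiform br n, ~ is_model br n &
      exists e, [/\ adapted_basis br n e, z1_of br n e z1 & z2_of br n e z2]].

End Lie.

Definition table (K : fieldType) (V : vectType K) (n : nat) (e : nat -> V)
    (al ga be : K) (a b : nat) : V :=
  if (a == 1%N) && (3 <= b)%N then e b.-1
  else if (a == n - 2)%N && (b == n - 1)%N then al *: e 2%N
  else if (a == n - 2)%N && (b == n)%N then al *: e 3%N + ga *: e 2%N
  else if (a == n - 1)%N && (b == n)%N then al *: e 4%N + ga *: e 3%N + be *: e 2%N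
  else 0.

(* Main.v *)
Require Import Defs.
From HB Require Import structures.
From mathcomp Require Import all_boot all_order all_algebra reals.
From mathcomp.real_closed Require Import complex.
From mathcomp Require Import zify ring.
Set Implicit Arguments. Unset Strict Implicit. Unset Printing Implicit Defensive.
Import GRing.Theory.
Local Open Scope ring_scope.

Section Gen.
Variables (K : fieldType) (V : vectType K) (br : V -> V -> V).
Hypothesis hL : is_lie_bracket br.

Lemma brDl x y z : br (x + y) z = br x z + br y z.
Proof. by case: hL => h _ _ _; have := h 1 x y z; rewrite !scale1r. Qed.
Lemma brDr x y z : br z (x + y) = br z x + br z y.
Proof. by case: hL => _ h _ _; have := h 1 z x y; rewrite !scale1r. Qed.
Lemma br0l y : br 0 y = 0.
Proof. by have := brDl 0 0 y; rewrite addr0 => /(congr1 (fun t => t - br 0 y)); rewrite subrr addrK. Qed.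
Lemma br0r y : br y 0 = 0.
Proof. by have := brDr 0 0 y; rewrite addr0 => /(congr1 (fun t => t - br y 0)); rewrite subrr addrK. Qed.
Lemma brZl a x z : br (a *: x) z = a *: br x z.
Proof. by case: hL => h _ _ _; rewrite -[a *: x]addr0 h br0l addr0. Qed.
Lemma brZr a x z : br z (a *: x) = a *: br z x.
Proof. by case: hL => _ h _ _; rewrite -[a *: x]addr0 h br0r addr0. Qed.
Lemma brNl x z : br (- x) z = - br x z.
Proof. by rewrite -scaleN1r brZl scaleN1r. Qed.
Lemma brNr x z : br z (- x) = - br z x.
Proof. by rewrite -scaleN1r brZr scaleN1r. Qed.
Lemma brxx x : br x x = 0.
Proof. by case: hL. Qed.
Lemma brA x y : br x y = - br y x.
Proof.
have := brxx (x + y); rewrite brDl !brDr !brxx add0r addr0.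
by move/eqP; rewrite addr_eq0 => /eqP.
Qed.
Lemma brJ x y z : br x (br y z) + br y (br z x) + br z (br x y) = 0.
Proof. by case: hL. Qed.

Lemma br_suml I (r : seq I) (P : pred I) F y :
  br (\sum_(i <- r | P i) F i) y = \sum_(i <- r | P i) br (F i) y.
Proof. exact: (big_morph (fun x => br x y) (fun a b => brDl a b y) (br0l y)). Qed.
Lemma br_sumr I (r : seq I) (P : pred I) F y :
  br y (\sum_(i <- r | P i) F i) = \sum_(i <- r | P i) br y (F i).
Proof. exact: (big_morph (fun x => br y x) (fun a b => brDr a b y) (br0r y)). Qed.

Lemma bracket_in (X Y : seq V) (S : {vspace V}) :
  (forall x y, x \in X -> y \in Y -> br x y \in S) ->
  forall u w, u \in <<X>>%VS -> w \in <<Y>>%VS -> br u w \in S.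
Proof.
move=> hXY u w /(@coord_span _ _ _ (in_tuple X)) -> /(@coord_span _ _ _ (in_tuple Y)) ->.
rewrite br_suml; apply: memv_suml => i _; rewrite brZl; apply: memvZ.
rewrite br_sumr; apply: memv_suml => j _; rewrite brZr; apply: memvZ.
by apply: hXY; apply: mem_nth.
Qed.

Lemma bs_le (U W : {vspace V}) X Y (S : {vspace V}) :
  U = <<X>>%VS -> W = <<Y>>%VS ->
  (forall x y, x \in X -> y \in Y -> br x y \in S) ->
  (bracket_space br U W <= S)%VS.
Proof.
move=> hU hW hXY; apply/span_subvP => z /allpairsP [[u w] [/= hu hw ->]].
apply: (bracket_in hXY); rewrite -?hU -?hW; exact: vbasis_mem.
Qed.

Lemma bs_ge (U W : {vspace V}) u w :
  u \in U -> w \in W -> br u w \in bracket_space br U W.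
Proof.
move=> hu hw; have /andP[/eqP hU _] := vbasisP U; have /andP[/eqP hW _] := vbasisP W.
move: hu hw; rewrite -{1}hU -{1}hW; apply: bracket_in => x y hx hy.
by apply: memv_span; apply: allpairs_f.
Qed.

End Gen.

Section Fwd.
Variables (K : fieldType) (V : vectType K) (br : V -> V -> V).
Hypothesis hL : is_lie_bracket br.
Variables (n : nat) (e : nat -> V).
Hypothesis hn : (6 <= n)%N.
Hypothesis hB : is_basis_n n e.
Hypothesis ad1 : forall h, (3 <= h <= n)%N -> br (e 1%N) (e h) = e h.-1.
Hypothesis ad2 : forall h, (1 <= h <= n)%N -> br (e 2%N) (e h) = 0.
Hypothesis ad3 : forall h, (2 <= h <= n)%N -> br (e 3%N) (e h) = 0.
Hypothesis z1 : forall k, (4 <= k)%N -> (k < n - 2)%N -> br (e k) (e n) = 0.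

Local Notation c i j := (br (e i) (e j)).

Lemma J1 i j : (3 <= i <= n)%N -> (3 <= j <= n)%N ->
  br (e 1%N) (c i j) = c i j.-1 + c i.-1 j.
Proof.
move=> hi hj; have := brJ hL (e 1%N) (e i) (e j).
rewrite (brA hL (e j) (e 1%N)) !ad1 // (brNr hL) (brA hL (e j) (e i.-1)).
by move=> H; apply/eqP; rewrite -subr_eq0 opprD addrA H.
Qed.

Lemma claim k : forall i j, (j + k = n)%N -> (4 <= i)%N -> (i < j)%N ->
  (i + j <= 2 * n - 3)%N -> ~ (i = n - 2 /\ j = n - 1)%N -> c i j = 0.
Proof.
elim: k => [|k IH] i j hk hi hij hs hne.
  by rewrite addn0 in hk; subst j; apply: z1 => //; lia.
have hJ := J1 (i := i) (j := j.+1); rewrite /= in hJ.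
have h1 : c i j.+1 = 0 by apply: IH => //; lia.
have h2 : c i.-1 j.+1 = 0.
  case: (ltngtP i 4) => [|hi4|hi4]; first by lia.
    by apply: IH => //; lia.
  by subst i; apply: ad3; lia.
have := hJ ltac:(lia) ltac:(lia); rewrite h1 h2 addr0 (br0r hL) => <-.
by [].
Qed.

Lemma cn3n : c (n - 3) n = 0.
Proof.
case: (ltngtP n 6) => [|h|h]; first by lia.
  by apply: z1; lia.
have -> : (n - 3 = 3)%N by lia.
by apply: ad3; lia.
Qed.

Lemma cn3n1 : c (n - 3) (n - 1) = 0.
Proof.
case: (ltngtP n 6) => [|h|h]; first by lia.
  by apply: (@claim 1%N) => //; lia.
have -> : (n - 3 = 3)%N by lia.
by apply: ad3; lia.
Qed.

Lemma s1 : br (e 1%N) (c (n - 1) n) = c (n - 2) n.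
Proof.
rewrite J1; try lia.
have -> : n.-1 = (n - 1)%N by lia.
by rewrite (brxx hL) add0r; congr (c _ _); lia.
Qed.

Lemma s2 : br (e 1%N) (c (n - 2) n) = c (n - 2) (n - 1).
Proof.
rewrite J1; try lia.
have -> : (n - 2).-1 = (n - 3)%N by lia.
have -> : n.-1 = (n - 1)%N by lia.
by rewrite cn3n addr0.
Qed.

Lemma s3 : br (e 1%N) (c (n - 2) (n - 1)) = 0.
Proof.
rewrite J1; try lia.
have -> : (n - 2).-1 = (n - 3)%N by lia.
have -> : (n - 1).-1 = (n - 2)%N by lia.
by rewrite cn3n1 addr0 (brxx hL).
Qed.

Local Notation s := [seq e i | i <- iota 1 n].

Lemma expand v : exists x : nat -> K, v = \sum_(h <- iota 1 n) x h *: e h.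
Proof.
have hv : v \in <<s>>%VS by rewrite (span_basis hB) memvf.
have [k hk _] := free_span (basis_free hB) hv.
by exists (fun h => k (e h)); rewrite hk big_map.
Qed.

Lemma nthe h : (1 <= h <= n)%N -> nth 0 s h.-1 = e h.
Proof.
move=> hh; rewrite (nth_map 0%N) ?size_iota; last by lia.
by rewrite nth_iota; [congr e|]; lia.
Qed.

Lemma indexe h : (1 <= h <= n)%N -> index (e h) s = h.-1.
Proof.
move=> hh; rewrite -nthe // index_uniq ?(free_uniq (basis_free hB)) //.
by rewrite size_map size_iota; lia.
Qed.

Lemma mem_e h : (1 <= h <= n)%N -> e h \in s.
Proof. by move=> hh; apply: map_f; rewrite mem_iota; lia. Qed.

Lemma uniq0 (cf : nat -> K) : \sum_(h <- iota 1 n) cf h *: e h = 0 ->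
  forall h, (1 <= h <= n)%N -> cf h = 0.
Proof.
move=> H h hh; have fr := basis_free hB.
have [k hk huniq] := free_span fr (mem0v _).
pose k1 x := cf (index x s).+1.
have E1 : 0 = \sum_(x <- s) k1 x *: x.
  rewrite big_map -{1}H; apply: eq_big_seq => j; rewrite mem_iota => hj.
  by rewrite /k1 indexe; [congr (_ *: _); congr cf|]; lia.
have E0 : (0 : V) = \sum_(x <- s) (fun _ => 0 : K) x *: x.
  by rewrite big1 // => x _; rewrite scale0r.
have := huniq _ E1 (e h) (mem_e hh); have := huniq _ E0 (e h) (mem_e hh).
by rewrite /k1 indexe // => <-; rewrite prednK //; lia.
Qed.

Definition sh (x : nat -> K) h := if (2 <= h < n)%N then x h.+1 else 0.

Lemma shift x : br (e 1%N) (\sum_(h <- iota 1 n) x h *: e h) =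
  \sum_(h <- iota 1 n) sh x h *: e h.
Proof.
have n2 : (2 <= n)%N by lia.
have c12 : br (e 1%N) (e 2%N) = 0.
  by rewrite (brA hL) ad2 ?oppr0 //; lia.
rewrite br_sumr //.
have HL : iota 1 n = 1%N :: 2%N :: iota 3 (n - 2).
  by rewrite -[in LHS](subnKC n2) iotaD.
have HR : iota 1 n = 1%N :: iota 2 (n - 2) ++ [:: n].
  have E : (1 + (n - 2) + 1 = n)%N by lia.
  rewrite -[in LHS]E !iotaD /=; congr (_ :: _ ++ [:: _]); lia.
rewrite {1}HL !big_cons (brZr hL) (brxx hL) scaler0 add0r (brZr hL) c12 scaler0 add0r.
rewrite HR big_cons big_cat big_cons big_nil /sh /= ltnn andbF scale0r !addr0 add0r.
rewrite (iotaDl 1 2) big_map scale0r addr0; apply: eq_big_seq => h; rewrite mem_iota => hh.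
rewrite (brZr hL) ad1; last by lia.
by rewrite ifT //; lia.
Qed.

Lemma c12 : br (e 1%N) (e 2%N) = 0.
Proof. by rewrite (brA hL) ad2 ?oppr0 //; lia. Qed.

Lemma fwd_coords : exists x : nat -> K,
  [/\ c (n - 1) n = x 2%N *: e 2%N + x 3%N *: e 3%N + x 4%N *: e 4%N,
      c (n - 2) n = x 3%N *: e 2%N + x 4%N *: e 3%N &
      c (n - 2) (n - 1) = x 4%N *: e 2%N].
Proof.
have [x hx] := expand (c (n - 1) n).
have H3 : br (e 1%N) (br (e 1%N) (br (e 1%N) (c (n - 1) n))) = 0 by rewrite s1 s2 s3.
rewrite hx !shift in H3; have Z := uniq0 H3.
have xh : forall h, (5 <= h <= n)%N -> x h = 0.
  move=> h hh; have <- : sh (sh (sh x)) (h - 3) = x h.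
    rewrite /sh !ifT; try lia; congr x; lia.
  by apply: Z; lia.
have n4 : (4 <= n)%N by lia.
have X4 : c (n - 1) n = x 1%N *: e 1%N + x 2%N *: e 2%N + x 3%N *: e 3%N + x 4%N *: e 4%N.
  rewrite hx -[in iota 1 n](subnKC n4) iotaD big_cat /=.
  rewrite [X in _ + X]big1_seq ?addr0; last first.
    by move=> h /andP[_]; rewrite mem_iota => hh; rewrite xh ?scale0r //; lia.
  by rewrite !big_cons big_nil addr0 !addrA.
have Y2 : c (n - 2) n = x 3%N *: e 2%N + x 4%N *: e 3%N.
  by rewrite -s1 X4 !(brDr hL) !(brZr hL) (brxx hL) c12 !ad1 //= ?scaler0 ?add0r //; lia.
have Y1 : c (n - 2) (n - 1) = x 4%N *: e 2%N.
  by rewrite -s2 Y2 !(brDr hL) !(brZr hL) c12 !ad1 //= ?scaler0 ?add0r //; lia.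
have x1 : x 1%N = 0.
  have := brJ hL (e (n - 2)) (e (n - 1)) (e n).
  rewrite X4 (brA hL (e n)) Y2 Y1 !(brNr hL) !(brDr hL) !(brZr hL).
  rewrite (brA hL (e (n - 2)) (e 1%N)) ad1; last by lia.
  rewrite (brA hL _ (e 2%N)) ad2; last by lia.
  rewrite (brA hL (e (n - 2)) (e 3%N)) ad3; last by lia.
  rewrite (brA hL (e (n - 1)) (e 2%N)) ad2; last by lia.
  rewrite (brA hL (e (n - 1)) (e 3%N)) ad3; last by lia.
  rewrite (brA hL (e n) (e 2%N)) ad2; last by lia.
  have -> : c (n - 2) 4 = 0.
    case: (ltngtP n 6) => [|h|h]; first by lia.
      by rewrite (brA hL) (@claim 2%N) ?oppr0 //; lia.
    have -> : (n - 2 = 4)%N by lia.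
    by rewrite (brxx hL).
  rewrite ?oppr0 ?scaler0 ?addr0 ?subr0 scalerN => /eqP; rewrite oppr_eq0 scaler_eq0.
  have : e (n - 2).-1 != 0 by apply: (basis_not0 hB); apply: mem_e; lia.
  by move/negPf => ->; rewrite orbF => /eqP.
exists x; split => //.
by rewrite X4 x1 scale0r add0r.
Qed.

Lemma fwd_table : c (n - 2) (n - 1) != 0 ->
  exists al ga be, al != 0 /\ forall a b, (1 <= a)%N -> (a < b)%N -> (b <= n)%N ->
    c a b = table n e al ga be a b.
Proof.
move=> hz2; have [x [X Y2 Y1]] := fwd_coords.
exists (x 4%N), (x 3%N), (x 2%N); split.
  by apply: contraNneq hz2 => h; rewrite Y1 h scale0r.
move=> a b ha hab hb; rewrite /table.
case: (ltngtP a 4) => [ha4|ha4|ha4].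
  case: (a =P 1%N) => [ea|na].
    subst a; rewrite /=; case: ifP => hb3; first by rewrite ad1 //; lia.
    have -> : b = 2%N by lia.
    by rewrite c12 !ifF //; lia.
  rewrite /= !ifF; try lia.
  case: (a =P 2%N) => [->|na2]; first by rewrite ad2 //; lia.
  have -> : a = 3%N by lia.
  by rewrite ad3 //; lia.
all: have -> : (a == 1%N) = false by lia.
all: rewrite /=.
all: case: ifP => h1; [have [-> ->] : a = (n - 2)%N /\ b = (n - 1)%N by lia|];
  first by rewrite Y1.
all: case: ifP => h2; [have [-> ->] : a = (n - 2)%N /\ b = n by lia|];
  first by rewrite Y2 addrC.
all: case: ifP => h3; [have [-> ->] : a = (n - 1)%N /\ b = n by lia|];
  first by rewrite X addrC [x 2%N *: _ + _]addrC addrA.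
all: apply: (@claim (n - b)); lia.
Qed.

End Fwd.

Ltac tcase := rewrite /table; repeat (case: ifP => ?).

Section Conv.
Variables (K : fieldType) (V : vectType K) (br : V -> V -> V).
Hypothesis hL : is_lie_bracket br.
Variables (n : nat) (e : nat -> V) (al ga be : K).
Hypothesis hn : (6 <= n)%N.
Hypothesis hB : is_basis_n n e.
Hypothesis hT : forall a b, (1 <= a)%N -> (a < b)%N -> (b <= n)%N ->
  br (e a) (e b) = table n e al ga be a b.
Hypothesis hal : al != 0.

Local Notation s := [seq e i | i <- iota 1 n].
Definition Sp m := <<[seq e i | i <- iota 2 (m - 1)]>>%VS.

Lemma brT a b : (1 <= a <= n)%N -> (1 <= b <= n)%N ->
  br (e a) (e b) = if (a < b)%N then table n e al ga be a b
                   else if (b < a)%N then - table n e al ga be b a else 0.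
Proof.
move=> ha hb; case: ltngtP => h.
- by apply: hT => //; lia.
- by rewrite (brA hL) hT //; lia.
- by rewrite h (brxx hL).
Qed.

Lemma mem_s h : (1 <= h <= n)%N -> e h \in s.
Proof. by move=> hh; apply: map_f; rewrite mem_iota; lia. Qed.

Lemma e_neq0 h : (1 <= h <= n)%N -> e h != 0.
Proof. by move=> hh; apply: (basis_not0 hB); apply: mem_s. Qed.

Lemma memS m j : (2 <= j <= m)%N -> e j \in Sp m.
Proof. by move=> hj; apply: memv_span; apply: map_f; rewrite mem_iota; lia. Qed.


Ltac memtac := repeat first [ rewrite memvN | apply: memvD | apply: memvZ | apply: mem0v | (apply: memS; lia) ].

Lemma fullE : fullv = <<s>>%VS.
Proof. by rewrite (span_basis hB). Qed.

Lemma BSm m : (2 <= m <= n - 1)%N -> bracket_space br (Sp m) fullv = Sp (m - 1).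
Proof.
move=> hm; apply/eqP; rewrite eqEsubv; apply/andP; split.
  apply: (bs_le hL (erefl _) fullE) => x y /mapP [h hh ->] /mapP [k hk ->].
  move: hh hk; rewrite !mem_iota => hh hk.
  rewrite brT; try lia.
  by tcase; memtac; lia.
apply/span_subvP => x /mapP [j hj ->]; move: hj; rewrite mem_iota => hj.
have -> : e j = br (e j.+1) (- e 1%N).
  by rewrite (brNr hL) (brA hL) opprK hT //; try lia; tcase; try (exfalso; lia).
by apply: (bs_ge hL); [apply: memS; lia | apply: memvf].
Qed.

Lemma BSf : bracket_space br fullv fullv = Sp (n - 1).
Proof.
apply/eqP; rewrite eqEsubv; apply/andP; split.
  apply: (bs_le hL fullE fullE) => x y /mapP [h hh ->] /mapP [k hk ->].
  move: hh hk; rewrite !mem_iota => hh hk.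
  rewrite brT; try lia.
  by tcase; memtac; lia.
apply/span_subvP => x /mapP [j hj ->]; move: hj; rewrite mem_iota => hj.
have -> : e j = br (e j.+1) (- e 1%N).
  by rewrite (brNr hL) (brA hL) opprK hT //; try lia; tcase; try (exfalso; lia).
by apply: (bs_ge hL); apply: memvf.
Qed.

Lemma dimS m : (1 <= m <= n)%N -> \dim (Sp m) = (m - 1)%N.
Proof.
move=> hm; have : free (map e (iota 1 (1 + (m - 1) + (n - m)))).
  by rewrite (_ : 1 + (m - 1) + (n - m) = n)%N; [exact: (basis_free hB) | lia].
rewrite !iotaD !map_cat -catA => /catr_free /catl_free /eqnP.
by rewrite size_map size_iota.
Qed.

Lemma lcsE k : (2 <= k <= n)%N -> lcs br k = Sp (n - k + 1).
Proof.
elim: k => [|k IH] hk; first lia.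
case: k IH hk => [|k] IH hk; first lia.
case: k IH hk => [|k] IH hk.
  have -> : lcs br 2 = bracket_space br fullv fullv by [].
  by rewrite BSf (_ : n - 2 + 1 = n - 1)%N //; lia.
have -> : lcs br k.+3 = bracket_space br (lcs br k.+2) fullv by [].
rewrite IH; last lia.
rewrite BSm; last lia.
by congr Sp; lia.
Qed.

Lemma filC : filiform br n.
Proof.
split; first lia.
  by rewrite (size_basis (X := in_tuple s) hB) size_map size_iota.
by move=> k hk; rewrite lcsE // dimS; lia.
Qed.

Lemma not_model : ~ is_model br n.
Proof.
case=> f [hf hm].
pose T := <<[seq f i | i <- iota 2 (n - 1)]>>%VS.
have fE : fullv = <<[seq f i | i <- iota 1 n]>>%VS by rewrite (span_basis hf).
have H1 : forall u w, br u w \in T.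
  move=> u w; apply: (bracket_in hL (X := [seq f i | i <- iota 1 n])
     (Y := [seq f i | i <- iota 1 n])); rewrite -?fE ?memvf //.
  move=> x y /mapP [a ha ->] /mapP [b hb ->]; move: ha hb; rewrite !mem_iota => ha hb.
  case: (ltngtP a b) => hab.
  - rewrite hm; try lia; case: ifP => hc; last exact: mem0v.
    by apply: memv_span; apply: map_f; rewrite mem_iota; lia.
  - rewrite (brA hL) memvN hm; try lia; case: ifP => hc; last exact: mem0v.
    by apply: memv_span; apply: map_f; rewrite mem_iota; lia.
  - by rewrite hab (brxx hL) mem0v.
have H2 : forall u w, u \in T -> w \in T -> br u w = 0.
  move=> u w hu hw; apply/eqP; rewrite -memv0; move: hu hw.
  apply: (bracket_in hL) => x y /mapP [a ha ->] /mapP [b hb ->].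
  move: ha hb; rewrite !mem_iota => ha hb.
  case: (ltngtP a b) => hab.
  - by rewrite hm; try lia; rewrite ifF ?mem0v //; lia.
  - by rewrite (brA hL) memvN hm; try lia; rewrite ifF ?mem0v //; lia.
  - by rewrite hab (brxx hL) mem0v.
have := H2 _ _ (H1 (e 1%N) (e (n - 1))) (H1 (e 1%N) (e n)).
rewrite !hT; try lia.
rewrite /table /= !ifT; try lia.
rewrite (_ : (n - 1).-1 = n - 2)%N; last lia.
rewrite (_ : n.-1 = n - 1)%N; last lia.
rewrite hT; try lia.
rewrite /table ifF; last lia.
rewrite ifT; last lia.
by move/eqP; rewrite scaler_eq0 (negPf hal) (negPf (e_neq0 _)) //; lia.
Qed.

Lemma c1 h : (3 <= h <= n)%N -> br (e 1%N) (e h) = e h.-1.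
Proof. by move=> hh; rewrite hT; try lia; rewrite /table ifT //; lia. Qed.

Lemma c12C : br (e 1%N) (e 2%N) = 0.
Proof. by rewrite hT; try lia; tcase; try (exfalso; lia). Qed.

Lemma adC : adapted_basis br n e.
Proof.
split => //; first exact: c1.
  by move=> h hh; rewrite brT; try lia; tcase; rewrite ?oppr0 //; exfalso; lia.
by move=> h hh; rewrite brT; try lia; tcase; rewrite ?oppr0 //; exfalso; lia.
Qed.

Lemma nz2 : al *: e 2%N != 0.
Proof. by rewrite scaler_eq0 (negPf hal) (negPf (e_neq0 _)) //; lia. Qed.

Lemma nz3 : al *: e 3%N + ga *: e 2%N != 0.
Proof.
apply/eqP => h; have := congr1 (br (e 1%N)) h.
rewrite (brDr hL) !(brZr hL) c1 // ?c12C ?scaler0 ?addr0 ?(br0r hL); last lia.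
by move/eqP; rewrite (negPf nz2).
Qed.

Lemma z1C : z1_of br n e (n - 2).
Proof.
split.
  split; first lia.
  by rewrite hT; try lia; tcase; try (exfalso; lia); apply/eqP; exact: nz3.
move=> k hk [hk2 hne]; apply: hne.
by rewrite hT; try lia; tcase; try (exfalso; lia).
Qed.

Lemma z2C : z2_of br n e (n - 2).
Proof.
split.
  split; first lia; split; first lia.
  rewrite (_ : (n - 2).+1 = n - 1)%N; last lia.
  by rewrite hT; try lia; tcase; try (exfalso; lia); apply/eqP; exact: nz2.
move=> k hk [hk2 [hkn hne]]; apply: hne.
by rewrite hT; try lia; tcase; try (exfalso; lia).
Qed.

Lemma hasC : has_triple br (n - 2) (n - 2) n.
Proof.
split => //; [exact: filC | exact: not_model |].
by exists e; split; [exact: adC | exact: z1C | exact: z2C].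
Qed.

End Conv.

Ltac ind_simpl := repeat match goal with
  | |- context [ nat_of_bool ?b ] =>
     lazymatch b with true => fail | false => fail | _ =>
       first [ have -> : b = true by lia | have -> : b = false by lia ] end
  end; repeat change (nat_of_bool true) with 1%N; repeat change (nat_of_bool false) with 0%N.

Section Cons.
Variables (K : fieldType) (m : nat) (al ga be : K).
Local Notation n := m.+1.
Hypothesis hn : (6 <= n)%N.

Local Notation V := 'rV[K]_n.

Definition cf (v : V) (h : nat) : K := if (0 < h <= n)%N then v 0 (inord h.-1) else 0.
Arguments cf : simpl never.

Definition ind (b : bool) : K := (b : nat)%:R.

Definition F (x y : V) (h : nat) : K :=
  let m1 := cf x (n - 1) * cf y n - cf x n * cf y (n - 1) in
  let m2 := cf x (n - 2) * cf y n - cf x n * cf y (n - 2) in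
  let m3 := cf x (n - 2) * cf y (n - 1) - cf x (n - 1) * cf y (n - 2) in
  ((2 <= h <= n - 1)%N : nat)%:R * (cf x 1 * cf y h.+1 - cf y 1 * cf x h.+1)
  + ((h == 2)%N : nat)%:R * (be * m1 + ga * m2 + al * m3)
  + ((h == 3)%N : nat)%:R * (ga * m1 + al * m2)
  + ((h == 4)%N : nat)%:R * (al * m1).
Arguments F : simpl never.

Definition br (x y : V) : V := \row_(j < n) F x y j.+1.
Definition e (k : nat) : V := \row_(j < n) ((j.+1 == k)%N : nat)%:R.

Lemma brE x y i j : br x y i j = F x y j.+1.
Proof. by rewrite mxE. Qed.

Lemma cfL a x y h : cf (a *: x + y) h = a * cf x h + cf y h.
Proof. by rewrite /cf; case: (0 < h <= n)%N; rewrite ?mxE // mulr0 addr0. Qed.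
Lemma cfD x y h : cf (x + y) h = cf x h + cf y h.
Proof. by rewrite /cf; case: (0 < h <= n)%N; rewrite ?mxE ?addr0. Qed.
Lemma cfZ a x h : cf (a *: x) h = a * cf x h.
Proof. by rewrite /cf; case: (0 < h <= n)%N; rewrite ?mxE ?mulr0. Qed.

Lemma cf_br x y h : cf (br x y) h = ((0 < h <= n)%N : nat)%:R * F x y h.
Proof.
rewrite /cf; case: ifP => hh; last by rewrite mul0r.
by rewrite brE inordK ?prednK ?mul1r //; lia.
Qed.

Lemma cf_e k h : cf (e k) h = (((h == k) && (0 < h <= n))%N : nat)%:R.
Proof.
rewrite /cf; case: ifP => hh; last by rewrite andbF.
by rewrite mxE inordK ?prednK ?andbT //; lia.
Qed.

Lemma cf_inj v w : (forall h, (0 < h <= n)%N -> cf v h = cf w h) -> v = w.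
Proof.
move=> H; apply/rowP => j; have := H j.+1; rewrite /cf /= ltn_ord inord_val.
by apply.
Qed.

Lemma brL1 a x y z : br (a *: x + y) z = a *: br x z + br y z.
Proof. by apply/rowP => j; rewrite /br !mxE /F; cbv zeta; rewrite !cfL; ring. Qed.
Lemma brL2 a x y z : br x (a *: y + z) = a *: br x y + br x z.
Proof. by apply/rowP => j; rewrite /br !mxE /F; cbv zeta; rewrite !cfL; ring. Qed.
Lemma brxx0 x : br x x = 0.
Proof. by apply/rowP => j; rewrite /br !mxE /F; cbv zeta; ring. Qed.


Lemma jac_entry x y z h : (0 < h <= n)%N ->
  F x (br y z) h + F y (br z x) h + F z (br x y) h = 0.
Proof.
move=> hh; rewrite /F; cbv zeta; rewrite !cf_br.
have E1 : (n - 1).+1 = n by lia.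
have E2 : (n - 2).+1 = (n - 1)%N by lia.
rewrite /F; cbv zeta; rewrite !E1 !E2.
case: (ltnP h 5) => h5.
  case: h hh h5 => [|[|[|[|[|h]]]]] //= _ _; ind_simpl; ring.
ind_simpl; ring.
Qed.

Lemma brJ0 x y z : br x (br y z) + br y (br z x) + br z (br x y) = 0.
Proof.
apply/rowP => j; have := jac_entry x y z (h := j.+1) (ltn_ord j).
by rewrite /br !mxE.
Qed.

Lemma lieC : is_lie_bracket br.
Proof. split; [exact: brL1 | exact: brL2 | exact: brxx0 | exact: brJ0]. Qed.

Lemma cf0 h : cf 0 h = 0.
Proof. by rewrite /cf mxE; case: ifP. Qed.

Lemma tableC a b : (1 <= a)%N -> (a < b)%N -> (b <= n)%N ->
  br (e a) (e b) = table n e al ga be a b.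
Proof.
move=> ha hab hb; apply: cf_inj => h hh; rewrite cf_br /F; cbv zeta; rewrite !cf_e.
rewrite /table; case: ifP => hA.
  have ea : a = 1%N by lia.
  subst a; rewrite cf_e; case: (h =P b.-1) => hb1; first [exfalso; lia | ind_simpl; ring].
case: ifP => hB.
  have [-> ->] : a = (n - 2)%N /\ b = (n - 1)%N by lia.
  rewrite cfZ cf_e; case: (h =P 2%N) => h2; first [exfalso; lia | ind_simpl; ring].
case: ifP => hC.
  have [-> ->] : a = (n - 2)%N /\ b = n by lia.
  rewrite cfD !cfZ !cf_e; case: (h =P 2%N) => h2; case: (h =P 3%N) => h3; first [exfalso; lia | ind_simpl; ring].
case: ifP => hD.
  have [-> ->] : a = (n - 1)%N /\ b = n by lia.
  rewrite !cfD !cfZ !cf_e; case: (h =P 2%N) => h2; case: (h =P 3%N) => h3;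
    case: (h =P 4%N) => h4; first [exfalso; lia | ind_simpl; ring].
rewrite cf0.
have [ha1|ha1] := eqVneq a 1%N.
  subst a; case: (h =P 1%N) => h1; first [exfalso; lia | ind_simpl; ring].
first [exfalso; lia | ind_simpl; ring].
Qed.

Lemma cf_sum (r : seq nat) (G : nat -> V) h :
  cf (\sum_(k <- r) G k) h = \sum_(k <- r) cf (G k) h.
Proof. exact: (big_morph (fun v => cf v h) (fun a b => cfD a b h) (cf0 h)). Qed.

Lemma decomp v : v = \sum_(k <- iota 1 n) cf v k *: e k.
Proof.
apply: cf_inj => h hh; rewrite cf_sum.
under eq_bigr do rewrite cfZ cf_e.
rewrite (bigD1_seq h) ?iota_uniq ?mem_iota /=; try lia.
rewrite eqxx hh mulr1 big1 ?addr0 // => k hk.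
by rewrite eq_sym (negPf hk) mulr0.
Qed.

Lemma basisC : is_basis_n n e.
Proof.
rewrite /is_basis_n basisEdim size_map size_iota dimvf dim_matrix mul1r ltnSn andbT.
apply/subvP => v _; rewrite (decomp v) big_seq; apply: memv_suml => k hk; apply: memvZ.
by apply: memv_span; apply: map_f.
Qed.

End Cons.

Unset Implicit Arguments.

Theorem mainTheorem3 (R : realType) (n : nat) (hn : (6 <= n)%N) :
  (forall (V : vectType R[i]) (br : V -> V -> V),
     has_triple br (n - 2) (n - 2) n ->
     exists (e : nat -> V) (al ga be : R[i]),
       [/\ adapted_basis br n e, al != 0 &
           forall a b, (1 <= a)%N -> (a < b)%N -> (b <= n)%N ->
             br (e a) (e b) = table n e al ga be a b])
  /\
  (forall al ga be : R[i], al != 0 ->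
     exists (V : vectType R[i]) (br : V -> V -> V) (e : nat -> V),
       [/\ is_lie_bracket br, is_basis_n n e,
           forall a b, (1 <= a)%N -> (a < b)%N -> (b <= n)%N ->
             br (e a) (e b) = table n e al ga be a b &
           has_triple br (n - 2) (n - 2) n]).
Proof.
split.
  move=> V br0 [hL _ _ [e0 [[hB ad1 ad2 ad3] [_ hz1] [[_ [_ hz2]] _]]]].
  have z1 : forall k, (4 <= k)%N -> (k < n - 2)%N -> br0 (e0 k) (e0 n) = 0.
    move=> k hk hk2; apply/eqP; apply/negPn/negP => hne.
    by apply: (hz1 k hk2); split; [lia | apply/eqP].
  have hz : br0 (e0 (n - 2)%N) (e0 (n - 1)%N) != 0.
    by apply/eqP; rewrite (_ : (n - 1 = (n - 2).+1)%N) //; lia.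
  have [al [ga [be [hal hT]]]] := fwd_table hL hn hB ad1 ad2 ad3 z1 hz.
  by exists e0, al, ga, be; split.
move=> al ga be hal.
case: n hn => [|m] hn; first by [].
exists 'rV[R[i]]_m.+1, (br al ga be), (e (R[i]) m).
have hT := tableC al ga be hn.
have hB := basisC (R[i]) hn.
have hL := lieC al ga be hn.
by split => //; apply: (hasC hL hn hB hT hal).
Qed.
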